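(* Let $A\in\mathbb{Z}^{d\times n}$, $\mathbf{b}\in\mathbb{Z}^d$, $\mathbf{c}\in\mathbb{Z}^n$, $\mathbf{u}\in\mathbb{Z}_{\ge0}^n$. Let $\mathbf{x}_k$ be feasible, let $\alpha\mathbf{s}$ be a steepest-descent augmentation relative to $\mathbf{x}_k$, and let $\mathbf{x}_{k+1}:=\mathbf{x}_k+\alpha\mathbf{s}$. Let $\beta\mathbf{t}$ be a steepest-descent augmentation relative to $\mathbf{x}_{k+1}$. Then $-\mathbf{c}^\top\mathbf{s}/\|\mathbf{s}\|_1\ \ge\ -\mathbf{c}^\top\mathbf{t}/\|\mathbf{t}\|_1$.
   Context: Feasible means $A\mathbf{x}=\mathbf{b}$, $\mathbf{0}\le\mathbf{x}\le\mathbf{u}$, $\mathbf{x}\in\mathbb{Z}^n$. A steepest-descent augmentation relative to a feasible $\mathbf{x}$ is $\alpha\mathbf{s}$ where $\mathbf{s}\in\mathbb{Z}^n\setminus\{\mathbf{0}\}$, $A\mathbf{s}=\mathbf{0}$, $\mathbf{c}^\top\mathbf{s}<0$, $\alpha$ is a positive integer with $\mathbf{x}+\alpha\mathbf{s}$ feasible, and $-\mathbf{c}^\top\mathbf{s}/\|\mathbf{s}\|_1\ge-\mathbf{c}^\top\mathbf{z}/\|\mathbf{z}\|_1$ for every $\mathbf{z}\in\mathbb{Z}^n\setminus\{\mathbf{0}\}$ with $A\mathbf{z}=\mathbf{0}$ and $\mathbf{x}+\mathbf{z}$ feasible. *)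

(* Defs.v *)
From HB Require Import structures.
From mathcomp Require Import all_boot all_order all_algebra.
Set Implicit Arguments. Unset Strict Implicit. Unset Printing Implicit Defensive.
Import Order.TTheory GRing.Theory Num.Theory.
Local Open Scope ring_scope.

Definition vec (n : nat) := 'I_n -> int.

Definition vadd n (x y : vec n) : vec n := fun i => x i + y i.
Definition vscale n (a : int) (x : vec n) : vec n := fun i => a * x i.

Definition mxv d n (A : 'M[int]_(d, n)) (x : vec n) : vec d :=
  fun j => \sum_(i < n) A j i * x i.

Definition dotv n (c x : vec n) : int := \sum_(i < n) c i * x i.

Definition norm1 n (x : vec n) : int := \sum_(i < n) `|x i|.

Definition feasible d n (A : 'M[int]_(d, n)) (b : vec d) (u : vec n) (x : vec n) : Prop :=
  (forall j, mxv A x j = b j) /\ (forall i, 0 <= x i /\ x i <= u i).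

Definition sd_ratio n (c s : vec n) : rat := (- dotv c s)%:~R / (norm1 s)%:~R.

Definition steepest_aug d n (A : 'M[int]_(d, n)) (b : vec d) (c u : vec n)
    (x : vec n) (alpha : int) (s : vec n) : Prop :=
  (exists i, s i != 0) /\
  (forall j, mxv A s j = 0) /\
  dotv c s < 0 /\
  0 < alpha /\
  feasible A b u (vadd x (vscale alpha s)) /\
  (forall z : vec n, (exists i, z i != 0) -> (forall j, mxv A z j = 0) ->
     feasible A b u (vadd x z) -> sd_ratio c s >= sd_ratio c z).

Arguments sd_ratio {n} c s.
Arguments steepest_aug {d n} A b c u x alpha s.
Arguments feasible {d n} A b u x.

(* Main.v *)
Require Import Defs.
From HB Require Import structures.
From mathcomp Require Import all_boot all_order all_algebra.
From mathcomp Require Import ring lra zify.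
Import Order.TTheory GRing.Theory Num.Theory.
Local Open Scope ring_scope.

Lemma feasible_ext d n (A : 'M[int]_(d, n)) b u (x y : vec n) :
  (forall i, x i = y i) -> feasible A b u x -> feasible A b u y.
Proof.
move=> E [H1 H2]; split.
  move=> j; rewrite -(H1 j) /mxv; apply: eq_bigr => i _; by rewrite E.
by move=> i; rewrite -E.
Qed.

Lemma ratio_le (a b S Z : int) : 0 < S -> 0 < Z ->
  ((a%:~R / S%:~R : rat) <= b%:~R / Z%:~R) = (a * Z <= b * S).
Proof.
move=> hS hZ.
have hS' : (0 : rat) < S%:~R by rewrite ltr0z.
have hZ' : (0 : rat) < Z%:~R by rewrite ltr0z.
rewrite ler_pdivrMr // mulrAC ler_pdivlMr // -!intrM ler_int.
by rewrite mulrC [b * S]mulrC.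
Qed.

Lemma norm1_gt0 n (s : vec n) : (exists i, s i != 0) -> 0 < norm1 s.
Proof.
case=> i hi; rewrite /norm1 (bigD1 i) //=.
apply: (@lt_le_trans _ _ (`|s i|)); first by rewrite normr_gt0.
rewrite lerDl; apply: sumr_ge0 => k _; exact: normr_ge0.
Qed.

Theorem lemma4 (d n : nat) (A : 'M[int]_(d, n)) (b : vec d) (c u : vec n)
    (hu : forall i, 0 <= u i)
    (xk : vec n) (alpha beta : int) (s t : vec n) :
  feasible A b u xk ->
  steepest_aug A b c u xk alpha s ->
  steepest_aug A b c u (vadd xk (vscale alpha s)) beta t ->
  sd_ratio c s >= sd_ratio c t.
Proof.
move=> _ [snz [As [cs [ha [_ Hs]]]]] [tnz [At [ct [hb [ft _]]]]].
have hS := @norm1_gt0 _ _ snz; have hT := @norm1_gt0 _ _ tnz.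
rewrite /sd_ratio ratio_le //.
rewrite leNgt; apply/negP => Hlt.
set z : vec n := fun i => alpha * s i + beta * t i.
have dz : dotv c z = alpha * dotv c s + beta * dotv c t.
  rewrite /dotv /z !mulr_sumr -big_split /=; apply: eq_bigr => i _; ring.
have nz : norm1 z <= alpha * norm1 s + beta * norm1 t.
  rewrite /norm1 /z !mulr_sumr -big_split /=; apply: ler_sum => i _.
  apply: le_trans (ler_normD _ _) _.
  by rewrite !normrM (gtr0_norm ha) (gtr0_norm hb).
have zne : exists i, z i != 0.
  case: (pickP (fun i => z i != 0)) => [i hi | H]; first by exists i.
  have : dotv c z = 0.
    rewrite /dotv big1 // => i _; move: (H i) => /negbFE /eqP ->; by rewrite mulr0.
  rewrite dz => E.
  have : alpha * dotv c s + beta * dotv c t < 0.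
    by rewrite -[0](addr0 0); apply: ltrD; rewrite pmulr_rlt0.
  by rewrite E ltxx.
have hZ := @norm1_gt0 _ _ zne.
have Az : forall j, mxv A z j = 0.
  move=> j; rewrite /mxv /z.
  have -> : \sum_(i < n) A j i * (alpha * s i + beta * t i) =
     alpha * mxv A s j + beta * mxv A t j.
    rewrite /mxv !mulr_sumr -big_split /=; apply: eq_bigr => i _; ring.
  by rewrite As At !mulr0 addr0.
have fz : feasible A b u (vadd xk z).
  apply: feasible_ext ft => i; rewrite /vadd /vscale /z; ring.
move: (Hs z zne Az fz); rewrite /sd_ratio ratio_le // dz.
move: Hlt nz; set S := norm1 s; set T := norm1 t; set Z := norm1 z.
set p := dotv c s; set q := dotv c t.
move=> Hlt nz H.
have e1 : - p * Z <= - p * (alpha * S + beta * T).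
  by apply: ler_wpM2l => //; rewrite oppr_ge0; exact: ltW.
have e2 : beta * (- p * T) < beta * (- q * S) by rewrite ltr_pM2l.
have e3 : - (alpha * p + beta * q) * S = alpha * (- p * S) + beta * (- q * S) by ring.
have e4 : - p * (alpha * S + beta * T) = alpha * (- p * S) + beta * (- p * T) by ring.
rewrite e3 in H; rewrite e4 in e1.
have := le_trans H e1; rewrite lerD2l => H2.
by move: (lt_le_trans e2 H2); rewrite ltxx.
Qed.
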